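(* Let $G$ and $H$ be graphs such that: (a) $G$ admits an automorphism $\eta$ with $\eta(v)\in N(v)$ for every $v\in V(G)$, and every orbit of $\eta$ has even length; (b) $H$ is bipartite and every vertex of $H$ has even degree. Then $\alpha_{\mathrm{od}}(\mu[G,H])\ge |H|\cdot\alpha_{\mathrm{od}}(G)$.
   Context: For graphs $G$ and $H$, $\mu[G,H]$ is the graph obtained by replacing each vertex $w\in V(H)$ with a copy $G_w$ of $G$ and, for every edge $w_1w_2\in E(H)$, adding the perfect matching between $G_{w_1}$ and $G_{w_2}$ that joins the two copies of each vertex of $G$ (i.e., $\mu[G,H]$ is the Cartesian product $G\,\Box\,H$). An odd independent set in a graph $F=(V,E)$ is an independent set $S$ such that every $v\in V\setminus S$ has either no neighbor or an odd number of neighbors in $S$; $\alpha_{\mathrm{od}}(F)$ is the maximum size of such a set. $|H|$ is the number of vertices of $H$; $N(v)$ is the open neighborhood. *)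

(* Defs.v *)
From mathcomp Require Import all_boot all_fingroup.
Set Implicit Arguments. Unset Strict Implicit. Unset Printing Implicit Defensive.

Definition simple_graph (T : finType) (e : rel T) : Prop :=
  symmetric e /\ irreflexive e.

Definition nbhd (T : finType) (e : rel T) (v : T) : {set T} := [set u | e v u].

Definition independent (T : finType) (e : rel T) (S : {set T}) : bool :=
  [forall x in S, forall y in S, ~~ e x y].

Definition odd_independent (T : finType) (e : rel T) (S : {set T}) : bool :=
  independent e S &&
  [forall v in ~: S, (#|nbhd e v :&: S| == 0) || odd #|nbhd e v :&: S|].

Definition alpha_od (T : finType) (e : rel T) : nat :=
  \max_(S : {set T} | odd_independent e S) #|S|.

(* mu[G,H] = Cartesian product G box H, vertices (g, h) *)
Definition cart_prod (T1 T2 : finType) (e1 : rel T1) (e2 : rel T2) : rel (T1 * T2) :=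
  fun x y => (e1 x.1 y.1 && (x.2 == y.2)) || ((x.1 == y.1) && e2 x.2 y.2).

Definition bipartite (T : finType) (e : rel T) : Prop :=
  exists c : T -> bool, forall x y, e x y -> c x != c y.

Definition graph_automorphism (T : finType) (e : rel T) (eta : {perm T}) : Prop :=
  forall x y, e (eta x) (eta y) = e x y.

(* Main.v *)
Require Import Defs.
From mathcomp Require Import all_boot all_fingroup.
Set Implicit Arguments. Unset Strict Implicit. Unset Printing Implicit Defensive.

Definition Sb (T : finType) (eta : {perm T}) (S : {set T}) (b : bool) : {set T} :=
  if b then [set x | (eta^-1)%g x \in S] else S.

Lemma aut_inv (T : finType) (e : rel T) (eta : {perm T}) :
  graph_automorphism e eta -> forall x y, e ((eta^-1)%g x) ((eta^-1)%g y) = e x y.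
Proof. by move=> A x y; rewrite -A !permKV. Qed.

Lemma Sb_odd (T : finType) (e : rel T) (eta : {perm T}) S b :
  graph_automorphism e eta -> odd_independent e S -> odd_independent e (Sb eta S b).
Proof.
move=> A; case: b => //=.
case/andP=> /forallP I /forallP O; apply/andP; split.
  apply/forallP=> x; apply/implyP; rewrite inE => xS.
  apply/forallP=> y; apply/implyP; rewrite inE => yS.
  rewrite -(aut_inv A); have := I ((eta^-1)%g x); rewrite xS /= => /forallP /(_ ((eta^-1)%g y)).
  by rewrite yS.
apply/forallP=> v; apply/implyP; rewrite !inE => vS.
have -> : nbhd e v :&: [set x | (eta^-1)%g x \in S] =
   (eta^-1)%g @^-1: (nbhd e ((eta^-1)%g v) :&: S).
  by apply/setP=> x; rewrite !inE aut_inv.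
rewrite card_preimset; last exact: perm_inj.
by have := O ((eta^-1)%g v); rewrite inE vS.
Qed.

Lemma Sb_disj (T : finType) (e : rel T) (eta : {perm T}) S g :
  simple_graph e -> (forall v, eta v \in nbhd e v) -> independent e S ->
  g \in Sb eta S true -> g \in Sb eta S false -> False.
Proof.
move=> [sy _] N /forallP I; rewrite /= inE => h1 h2.
have := N ((eta^-1)%g g); rewrite permKV inE => E.
have := I ((eta^-1)%g g); rewrite h1 /= => /forallP /(_ g).
by rewrite h2 E.
Qed.

Lemma Sb_nb (T : finType) (e : rel T) (eta : {perm T}) S g b :
  simple_graph e -> (forall v, eta v \in nbhd e v) ->
  g \in Sb eta S (~~ b) -> g \notin Sb eta S b -> nbhd e g :&: Sb eta S b != set0.
Proof.
move=> [sy _] N; case: b => /= h1 h2; apply/set0Pn.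
  exists (eta g); rewrite !inE permK h1 andbT.
  by have := N g; rewrite inE.
exists ((eta^-1)%g g); rewrite !inE.
rewrite inE in h1; rewrite h1 andbT.
by have := N ((eta^-1)%g g); rewrite permKV inE sy.
Qed.

Lemma alpha_attained (T : finType) (e : rel T) :
  exists2 S, odd_independent e S & #|S| = alpha_od e.
Proof.
have h0 : odd_independent e set0.
  apply/andP; split; apply/forallP=> x; rewrite ?inE //.
  by apply/implyP=> _; rewrite setI0 cards0.
have pos : 0 < #|(fun S : {set T} => odd_independent e S)|.
  by apply/card_gt0P; exists set0.
have [S SP S0] := @eq_bigmax_cond _ (fun S => odd_independent e S) (fun S : {set T} => #|S|) pos.
exists S; first exact: SP.
by rewrite /alpha_od -S0; by apply: eq_bigl.
Qed.

Theorem theorem3 (T1 T2 : finType) (e1 : rel T1) (e2 : rel T2) :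
  simple_graph e1 -> simple_graph e2 ->
  (exists eta : {perm T1},
      graph_automorphism e1 eta /\
      (forall v, eta v \in nbhd e1 v) /\
      (forall v, ~~ odd (fingraph.order eta v))) ->
  bipartite e2 ->
  (forall w, ~~ odd #|nbhd e2 w|) ->
  #|T2| * alpha_od e1 <= alpha_od (cart_prod e1 e2).
Proof.
move=> G1 G2 [eta [A [N _]]] [c Hc] Hdeg.
have [S SO <-] := alpha_attained e1.
pose gm (x : T1 * T2) := (if c x.2 then (eta^-1)%g x.1 else x.1, x.2).
have gmI : injective gm.
  move=> [a1 b1] [a2 b2]; rewrite /gm /= => -[] + eb; subst b2.
  case: (c b1) => [EE|->] //.
  by rewrite (perm_inj EE).
pose P := gm @^-1: setX S [set: T2].
have memP x : (x \in P) = (x.1 \in Sb eta S (c x.2)).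
  by rewrite !inE /gm /= andbT; case: (c x.2); rewrite ?inE.
have cardP : #|P| = #|T2| * #|S|.
  by rewrite card_preimset // cardsX cardsT mulnC.
rewrite -cardP; apply: leq_bigmax_cond.
have SI : forall b, independent e1 (Sb eta S b).
  by move=> b; case/andP: (Sb_odd b A SO).
have cneq h h' : e2 h h' -> c h' = ~~ c h.
  by move/Hc; case: (c h); case: (c h').
case: G1 => sy1 ir1; case: G2 => sy2 ir2.
apply/andP; split.
  apply/forallP=> -[g h]; apply/implyP; rewrite memP /= => gS.
  apply/forallP=> -[g' h']; apply/implyP; rewrite memP /= => gS'.
  rewrite /cart_prod /=; apply/negP => /orP [/andP [E /eqP eh] | /andP [/eqP eg E]].
    subst h'; move: (SI (c h)) => /forallP /(_ g); rewrite gS /= => /forallP /(_ g').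
    by rewrite gS' E.
  subst g'; rewrite (cneq _ _ E) in gS'.
  case: (c h) gS gS' => /= gS gS'.
    exact: (Sb_disj (conj sy1 ir1) N (SI false) gS gS').
  exact: (Sb_disj (conj sy1 ir1) N (SI false) gS' gS).
apply/forallP=> -[g h]; apply/implyP; rewrite inE memP /= => gP.
pose X := nbhd e1 g :&: Sb eta S (c h).
pose A1 := (fun g' => (g', h)) @: X.
pose A2 := (fun h' => (g, h')) @: (if g \in Sb eta S (~~ c h) then nbhd e2 h else set0).
have EQ : nbhd (cart_prod e1 e2) (g, h) :&: P = A1 :|: A2.
  apply/setP=> -[g' h']; rewrite in_setI memP [_ \in nbhd _ _]inE in_setU /cart_prod /=.
  apply/idP/idP.
    case/andP=> /orP [/andP [E /eqP eh] | /andP [/eqP eg E]] M.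
      subst h'; apply/orP; left; apply/imsetP; exists g' => //.
      by rewrite !inE E.
    subst g'; apply/orP; right; apply/imsetP; exists h' => //.
    rewrite -(cneq _ _ E) M inE; exact E.
  case/orP=> /imsetP [y Y [-> ->]].
    by move: Y; rewrite !inE => /andP [-> ->]; rewrite eqxx.
  move: Y; case: ifP => M; last by rewrite inE.
  by rewrite inE => E; rewrite eqxx E (cneq _ _ E) M orbT.
have D : A1 :&: A2 = set0.
  apply/setP=> -[g' h']; rewrite !inE; apply/negP => /andP [/imsetP [y Y [-> ->]]].
  case/imsetP=> z _ [eg _]; move: Y; rewrite !inE -eg ir1 //.
have cA1 : #|A1| = #|X|.
  by rewrite card_imset // => a b [].
have cA2 : ~~ odd #|A2| /\ (#|A2| != 0 -> g \in Sb eta S (~~ c h)).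
  rewrite card_imset; last by move=> a b [].
  by case: ifP => _; rewrite ?cards0.
rewrite EQ cardsU D cards0 subn0 cA1.
have XO : (#|X| == 0) || odd #|X|.
  case/andP: (Sb_odd (c h) A SO) => _ /forallP /(_ g).
  by rewrite inE gP.
case: cA2 => ev nz.
case: (posnP #|X|) => X0.
  case: (posnP #|A2|) => A20; first by rewrite X0 A20.
  have := Sb_nb (conj sy1 ir1) N (nz (lt0n_neq0 A20)) gP.
  by rewrite -/X -card_gt0 X0.
rewrite oddD (negPf ev) addbF; move: XO; rewrite eqn0Ngt X0 /= => ->.
by rewrite orbT.
Qed.
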